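(* Let $X$ be a compact metric space and $Y\subseteq X$ a nonempty subset, endowed with the induced metric. Then $d^{us}_{GH}(X,Y)=d_{GH}(X,Y)$.
   Context: For a metric space, $|xy|$ denotes distance. A set-valued map $f:X\rightrightarrows Y$ assigns to each $x\in X$ a nonempty $f(x)\subseteq Y$ and is identified with its graph. A correspondence between $X$ and $Y$ is a subset $R\subseteq X\times Y$ whose projections to $X$ and to $Y$ are both surjective, regarded as the set-valued map $x\mapsto R(x)=\{y:(x,y)\in R\}$; $R^{-1}=\{(y,x):(x,y)\in R\}$; $\mathcal R(X,Y)$ is the set of all correspondences. The distortion of a nonempty $\sigma\subseteq X\times Y$ is $\operatorname{dis}\sigma=\sup\{||xx'|-|yy'||:(x,y),(x',y')\in\sigma\}\in[0,\infty]$, and $d_{GH}(X,Y)=\frac12\inf\{\operatorname{dis}R:R\in\mathcal R(X,Y)\}$. A set-valued map $f$ is upper semicontinuous if for every $x$ and every open $U\supseteq f(x)$ there is a neighborhood $V$ of $x$ with $f(x')\subseteq U$ for all $x'\in V$. $\mathcal R_{us}(X,Y)$ is the set of $R\in\mathcal R(X,Y)$ with both $R$ and $R^{-1}$ upper semicontinuous, and $d^{us}_{GH}(X,Y)=\frac12\inf\{\operatorname{dis}R:R\in\mathcal R_{us}(X,Y)\}$. *)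

(* Defs.v *)
From Stdlib Require Import Reals Lra List ProofIrrelevance.
From Coquelicot Require Import Coquelicot.
Open Scope R_scope.

Record MetricSpace := {
  carrier :> Type;
  dist : carrier -> carrier -> R;
  dist_eq0 : forall x y, dist x y = 0 <-> x = y;
  dist_sym : forall x y, dist x y = dist y x;
  dist_tri : forall x y z, dist x z <= dist x y + dist y z
}.
Arguments dist {m} _ _.

Definition open_set {X : MetricSpace} (U : X -> Prop) : Prop :=
  forall x, U x -> exists e, 0 < e /\ forall y, dist x y < e -> U y.

Definition compact_space (X : MetricSpace) : Prop :=
  forall (I : Type) (U : I -> X -> Prop),
    (forall i, open_set (U i)) -> (forall x, exists i, U i x) ->
    exists l : list I, forall x, exists i, In i l /\ U i x.

Section Sub.
Variable (X : MetricSpace) (Y : X -> Prop).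
Definition sub_dist (a b : {x : X | Y x}) : R := dist (proj1_sig a) (proj1_sig b).
Lemma sub_dist_eq0 a b : sub_dist a b = 0 <-> a = b.
Proof.
  unfold sub_dist; split.
  - intros H. apply dist_eq0 in H. destruct a, b; simpl in *; subst.
    f_equal; apply proof_irrelevance.
  - intros ->. apply dist_eq0; reflexivity.
Qed.
Lemma sub_dist_sym a b : sub_dist a b = sub_dist b a.
Proof. apply dist_sym. Qed.
Lemma sub_dist_tri a b c : sub_dist a c <= sub_dist a b + sub_dist b c.
Proof. apply dist_tri. Qed.
Definition subspace : MetricSpace :=
  {| carrier := {x : X | Y x}; dist := sub_dist;
     dist_eq0 := sub_dist_eq0; dist_sym := sub_dist_sym; dist_tri := sub_dist_tri |}.
End Sub.

(** Set-valued maps / relations, identified with their graphs. *)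
Definition relation_inv {X Y : Type} (R : X -> Y -> Prop) : Y -> X -> Prop :=
  fun y x => R x y.

Definition is_correspondence {X Y : Type} (R : X -> Y -> Prop) : Prop :=
  (forall x, exists y, R x y) /\ (forall y, exists x, R x y).

Definition upper_semicontinuous {X Y : MetricSpace} (f : X -> Y -> Prop) : Prop :=
  forall (x : X) (U : Y -> Prop), open_set U -> (forall y, f x y -> U y) ->
    exists V : X -> Prop, open_set V /\ V x /\
      forall x', V x' -> forall y, f x' y -> U y.

Definition distortion {X Y : MetricSpace} (s : X -> Y -> Prop) : Rbar :=
  Lub_Rbar (fun r => exists (x x' : X) (y y' : Y),
    s x y /\ s x' y' /\ r = Rabs (dist x x' - dist y y')).

Definition dGH (X Y : MetricSpace) : Rbar :=
  Rbar_mult (/ 2) (Rbar_glb (fun v => exists R : X -> Y -> Prop,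
    is_correspondence R /\ v = distortion R)).

Definition dGH_us (X Y : MetricSpace) : Rbar :=
  Rbar_mult (/ 2) (Rbar_glb (fun v => exists R : X -> Y -> Prop,
    is_correspondence R /\ upper_semicontinuous R /\
    upper_semicontinuous (relation_inv R) /\ v = distortion R)).

(* Main.v *)
Require Import Defs.
From Stdlib Require Import Reals.
From Coquelicot Require Import Coquelicot.
From Stdlib Require Import Lra List.
Open Scope R_scope.
Local Notation dist := Defs.dist.
Local Notation dist_tri := Defs.dist_tri.
Local Notation dist_sym := Defs.dist_sym.
Local Notation dist_eq0 := Defs.dist_eq0.
Local Notation open_set := Defs.open_set.

Lemma ball_open (M : MetricSpace) (x : M) d : open_set (fun u : M => dist x u < d).
Proof.
  intros u Hu. exists (d - dist x u). split; [lra|].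
  intros z Hz. pose proof (dist_tri M x u z). lra.
Qed.

Lemma dist_self (M : MetricSpace) (x : M) : dist x x = 0.
Proof. apply dist_eq0; reflexivity. Qed.

Lemma list_delta (X : MetricSpace) (l : list X) (x : X) eps :
  exists d, 0 < d /\ forall p, In p l -> forall z, dist x z < d ->
    dist z p <= eps -> dist x p <= eps.
Proof.
  induction l as [|a l IH].
  - exists 1; split; [lra|]. intros p [].
  - destruct IH as [d0 [Hd0 H0]].
    destruct (Rle_dec (dist x a) eps) as [Ha|Ha].
    + exists d0; split; auto. intros p [<-|Hp] z Hz Hzp; auto.
      eapply H0; eauto.
    + exists (Rmin d0 (dist x a - eps)). split.
      { apply Rmin_pos; lra. }
      intros p [<-|Hp] z Hz Hzp.
      * exfalso. pose proof (Rmin_r d0 (dist x a - eps)).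
        pose proof (dist_tri X x z a). lra.
      * pose proof (Rmin_l d0 (dist x a - eps)). eapply H0; eauto. lra.
Qed.

Lemma usc_gen (X M N : MetricSpace) (g : M -> X)
  (hg : forall u v, dist (g u) (g v) = dist u v) (l : list X) eps
  (P : X -> N -> Prop) (F : M -> N -> Prop)
  (HF : forall u w, F u w <-> exists p, In p l /\ dist (g u) p <= eps /\ P p w) :
  upper_semicontinuous F.
Proof.
  intros x U _ HU.
  destruct (list_delta X l (g x) eps) as [d [Hd Hdl]].
  exists (fun u : M => dist x u < d). split; [apply ball_open|]. split.
  - rewrite dist_self. exact Hd.
  - intros u Hu w Hw. apply HU. apply HF in Hw. destruct Hw as [p [Hp [H1 H2]]].
    apply HF. exists p. split; auto. split; auto.
    eapply Hdl; eauto. rewrite hg. exact Hu.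
Qed.

Section Main.
Variable (X : MetricSpace) (Y : X -> Prop).
Let S := subspace X Y.

Definition Rp (l : list X) eps (R : X -> S -> Prop) : X -> S -> Prop :=
  fun x y => exists p q, In p l /\ In q l /\ dist x p <= eps /\
    dist (proj1_sig y) q <= eps /\
    exists a b, R a b /\ dist a p <= eps /\ dist (proj1_sig b) q <= eps.

Lemma Rp_usc l eps R : upper_semicontinuous (Rp l eps R).
Proof.
  apply (usc_gen X X S (fun x => x) (fun u v => eq_refl) l eps
    (fun p y => exists q, In q l /\ dist (proj1_sig y) q <= eps /\
      exists a b, R a b /\ dist a p <= eps /\ dist (proj1_sig b) q <= eps)).
  intros u w; unfold Rp; split.
  - intros [p [q [? [? [? [? ?]]]]]]. exists p; repeat split; auto.
    exists q; repeat split; auto.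
  - intros [p [? [? [q [? [? ?]]]]]]. exists p, q; repeat split; auto.
Qed.

Lemma Rp_usc_inv l eps R : upper_semicontinuous (relation_inv (Rp l eps R)).
Proof.
  apply (usc_gen X S X (@proj1_sig X Y) (fun u v => eq_refl) l eps
    (fun q x => exists p, In p l /\ dist x p <= eps /\
      exists a b, R a b /\ dist a p <= eps /\ dist (proj1_sig b) q <= eps)).
  intros u w; unfold relation_inv, Rp; split.
  - intros [p [q [? [? [? [? ?]]]]]]. exists q; repeat split; auto.
    exists p; repeat split; auto.
  - intros [q [? [? [p [? [? ?]]]]]]. exists p, q; repeat split; auto.
Qed.

Lemma Rp_sup (l : list X) eps (R : X -> S -> Prop) (Hl : forall x : X, exists p, In p l /\ dist x p <= eps) :
  forall x y, R x y -> Rp l eps R x y.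
Proof.
  intros x y H. destruct (Hl x) as [p [Hp Hxp]].
  destruct (Hl (proj1_sig y)) as [q [Hq Hyq]].
  exists p, q; repeat split; auto. exists x, y; repeat split; auto.
Qed.

Lemma abs_bound a b c e : Rabs a <= c -> Rabs (b - a) <= e -> Rabs b <= c + e.
Proof. intros H1 H2. unfold Rabs in *. repeat destruct Rcase_abs; lra. Qed.

Lemma tri4 (M : MetricSpace) (x x' a a' : M) :
  Rabs (dist x x' - dist a a') <= dist x a + dist x' a'.
Proof.
  pose proof (dist_tri M x a x'). pose proof (dist_tri M a a' x'). pose proof (dist_sym M a' x').
  pose proof (dist_tri M a x a'). pose proof (dist_tri M x x' a').
  pose proof (dist_sym M x a). pose proof (dist_sym M x' a').
  unfold Rabs; destruct Rcase_abs; lra.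
Qed.

Lemma Rp_dist l eps R d : 0 <= eps -> distortion R = Finite d ->
  Rbar_le (distortion (Rp l eps R)) (Finite (d + 8 * eps)).
Proof.
  intros He Hd. unfold distortion in *.
  destruct (Lub_Rbar_correct (fun r => exists (x x' : X) (y y' : S),
    R x y /\ R x' y' /\ r = Rabs (dist x x' - dist y y'))) as [Hub _].
  rewrite Hd in Hub.
  destruct (Lub_Rbar_correct (fun r => exists (x x' : X) (y y' : S),
    Rp l eps R x y /\ Rp l eps R x' y' /\ r = Rabs (dist x x' - dist y y'))) as [_ Hl].
  apply Hl. intros r [x [x' [y [y' [H1 [H2 ->]]]]]].
  destruct H1 as [p [q [_ [_ [Hxp [Hyq [a [b [Hab [Hap Hbq]]]]]]]]]].
  destruct H2 as [p' [q' [_ [_ [Hxp' [Hyq' [a' [b' [Hab' [Hap' Hbq']]]]]]]]]].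
  assert (Hr : Rbar_le (Rabs (dist a a' - dist b b')) d).
  { apply Hub. exists a, a', b, b'. auto. }
  simpl in Hr. simpl. unfold sub_dist in *.
  pose proof (tri4 X x x' a a'). pose proof (tri4 X (proj1_sig y) (proj1_sig y') (proj1_sig b) (proj1_sig b')).
  pose proof (dist_tri X x p a). pose proof (dist_sym X p a).
  pose proof (dist_tri X x' p' a'). pose proof (dist_sym X p' a').
  pose proof (dist_tri X (proj1_sig y) q (proj1_sig b)). pose proof (dist_sym X q (proj1_sig b)).
  pose proof (dist_tri X (proj1_sig y') q' (proj1_sig b')). pose proof (dist_sym X q' (proj1_sig b')).
  assert (Rabs (dist x x' - dist (proj1_sig y) (proj1_sig y') - (dist a a' - dist (proj1_sig b) (proj1_sig b'))) <= 8 * eps).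
  { revert H H0. unfold Rabs; repeat destruct Rcase_abs; intros; lra. }
  replace (d + 8 * eps) with (d + 8 * eps) by ring.
  eapply abs_bound; eauto.
Qed.

End Main.

Lemma net (X : MetricSpace) eps : compact_space X -> 0 < eps ->
  exists l : list X, forall x : X, exists p, In p l /\ dist x p <= eps.
Proof.
  intros HC He.
  destruct (HC X (fun c x : X => dist c x < eps)) as [l Hl].
  - intros c. apply ball_open.
  - intros x. exists x. rewrite dist_self. exact He.
  - exists l. intros x. destruct (Hl x) as [p [Hp Hd]]. exists p. split; auto.
    rewrite dist_sym. lra.
Qed.

Theorem mainTheorem6 (X : MetricSpace) (Y : X -> Prop) :
  compact_space X -> (exists y, Y y) ->
  dGH_us X (subspace X Y) = dGH X (subspace X Y).
Proof.
  intros HC [y0 Hy0]. unfold dGH_us, dGH. f_equal.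
  set (E1 := fun v => exists R : X -> subspace X Y -> Prop,
    is_correspondence R /\ v = distortion R).
  set (E2 := fun v => exists R : X -> subspace X Y -> Prop,
    is_correspondence R /\ upper_semicontinuous R /\
    upper_semicontinuous (relation_inv R) /\ v = distortion R).
  apply Rbar_le_antisym.
  2:{ apply Rbar_glb_subset. intros v [R [H1 [_ [_ H2]]]]. exists R; auto. }
  apply (proj2 (proj2_sig (Rbar_ex_glb E1))). intros v [R [[Hc1 Hc2] ->]].
  assert (Hus : forall l eps, 0 <= eps -> (forall x : X, exists p, In p l /\ dist x p <= eps) ->
     Rbar_le (Rbar_glb E2) (distortion (Rp X Y l eps R))).
  { intros l eps He Hl. apply (proj1 (proj2_sig (Rbar_ex_glb E2))). exists (Rp X Y l eps R). split; [|split; [apply Rp_usc|split; [apply Rp_usc_inv|reflexivity]]].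
    split.
    - intros x. destruct (Hc1 x) as [y Hy]. exists y. apply Rp_sup; auto.
    - intros y. destruct (Hc2 y) as [x Hx]. exists x. apply Rp_sup; auto. }
  destruct (distortion R) as [d| |] eqn:Hd.
  - assert (Hk : forall eps, 0 < eps -> Rbar_le (Rbar_glb E2) (Finite (d + eps))).
    { intros eps He. destruct (net X (eps / 8) HC) as [l Hl]; [lra|].
      eapply Rbar_le_trans. apply (Hus l (eps/8)); auto; lra.
      replace (d + eps) with (d + 8 * (eps / 8)) by field.
      apply Rp_dist; auto; lra. }
    destruct (Rbar_glb E2) as [g2| |] eqn:Hg2.
    + simpl. apply le_epsilon. intros e He. specialize (Hk e He). simpl in Hk. lra.
    + specialize (Hk 1 Rlt_0_1). simpl in Hk. contradiction.
    + simpl. exact I.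
  - destruct (Rbar_glb E2); simpl; auto.
  - exfalso. destruct (Hc1 y0) as [b Hb].
    destruct (Lub_Rbar_correct (fun r => exists (x x' : X) (y y' : subspace X Y),
      R x y /\ R x' y' /\ r = Rabs (dist x x' - dist y y'))) as [Hub _].
    unfold distortion in Hd. rewrite Hd in Hub.
    specialize (Hub (Rabs (dist y0 y0 - dist b b))). simpl in Hub. apply Hub.
    exists y0, y0, b, b. auto.
Qed.
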